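(* Let $G=G_1\times G_2$ be a product of commutative groups, $f_1\in\ell^1(G_1)$, $f_2\in\ell^1(G_2)$ nonnegative, and define $f\in\ell^1(G)$ by $f(x,y)=f_1(x)f_2(y)$. Let $1<p<\infty$. Then \[ \gamma_p(f)=\gamma_p(f_1)\gamma_p(f_2),\qquad \gamma'(f)\le\gamma'(f_1)\gamma'(f_2),\qquad \gamma''(f)\le\gamma''(f_1)\gamma''(f_2), \] each functional being computed in the group on which its argument lives.
   Context: For nonnegative functions $f,g$ on a commutative group $K$, $(f\star g)(x)=\max_t f(t)g(x-t)$ (max-convolution). The distribution function of $f$ is $F(t)=|\{x:f(x)\ge t\}|$ for $t>0$, and $g\sim h$ means $g,h$ have the same distribution function. For nonnegative $f\in\ell^1(K)$, $1/p+1/q=1$, and $g,h$ ranging over nonzero nonnegative functions in $\ell^1(K)$: $\gamma_p(f)=\inf_{g,h}\frac{\|f\star g\star h\|_1}{\|g\|_p\|h\|_q}$; $\gamma'(f)=\inf_{g\sim h}\frac{\|f\star g\star h\|_1}{\|g\|_2\|h\|_2}$; $\gamma''(f)=\inf_g\frac{\|f\star g\star g\|_1}{\|g\|_2^2}$. *)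

(* Defs.v *)
From HB Require Import structures.
From mathcomp Require Import all_boot all_order all_algebra.
From mathcomp Require Import all_classical all_reals all_analysis.
Set Implicit Arguments. Unset Strict Implicit. Unset Printing Implicit Defensive.
Import Order.TTheory GRing.Theory Num.Theory.
Local Open Scope classical_set_scope.
Local Open Scope ring_scope.

Section MaxConv.
Variables (R : realType) (K : zmodType).

Definition nonneg_l1 (f : K -> R) : Prop :=
  (forall x, 0 <= f x) /\ summable setT (fun x => (f x)%:E).

(* max-convolution (f * g)(x) = max_t f(t) g(x - t), taken as a supremum
   (the maximum is attained for nonnegative l^1 functions) *)
Definition maxconv (f g : K -> R) : K -> R :=
  fun x => sup [set f t * g (x - t) | t in [set: K]].

Definition l1norm (f : K -> R) : R := fine (\esum_(x in [set: K]) (`|f x|)%:E).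

Definition lpnorm (p : R) (f : K -> R) : R :=
  (fine (\esum_(x in [set: K]) (`|f x| `^ p)%:E)) `^ p^-1.

Definition same_distr (g h : K -> R) : Prop :=
  forall t : R, 0 < t -> card_eq [set x | t <= g x] [set x | t <= h x].

Definition conj_exp (p : R) : R := p / (p - 1).

Definition gamma_p (p : R) (f : K -> R) : \bar R :=
  ereal_inf [set ((l1norm (maxconv (maxconv f gh.1) gh.2))
                   / (lpnorm p gh.1 * lpnorm (conj_exp p) gh.2))%:E
            | gh in [set gh : (K -> R) * (K -> R) |
                     nonneg_l1 gh.1 /\ gh.1 <> (fun=> 0) /\
                     nonneg_l1 gh.2 /\ gh.2 <> (fun=> 0)]].

Definition gamma' (f : K -> R) : \bar R :=
  ereal_inf [set ((l1norm (maxconv (maxconv f gh.1) gh.2))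
                   / (lpnorm 2 gh.1 * lpnorm 2 gh.2))%:E
            | gh in [set gh : (K -> R) * (K -> R) |
                     nonneg_l1 gh.1 /\ gh.1 <> (fun=> 0) /\
                     nonneg_l1 gh.2 /\ gh.2 <> (fun=> 0) /\
                     same_distr gh.1 gh.2]].

Definition gamma'' (f : K -> R) : \bar R :=
  ereal_inf [set ((l1norm (maxconv (maxconv f g) g)) / (lpnorm 2 g ^+ 2))%:E
            | g in [set g : K -> R | nonneg_l1 g /\ g <> (fun=> 0)]].

End MaxConv.

Definition tensorf (R : realType) (G1 G2 : zmodType) (f1 : G1 -> R) (f2 : G2 -> R)
  : (G1 * G2)%type -> R := fun xy => f1 xy.1 * f2 xy.2.

(* Main.v *)
Require Import Defs.
From HB Require Import structures.
From mathcomp Require Import all_boot all_order all_algebra.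
From mathcomp Require Import all_classical all_reals all_analysis.
From mathcomp Require Import ring.
Import Order.TTheory GRing.Theory Num.Theory.
Local Open Scope classical_set_scope.
Local Open Scope ring_scope.
Set Implicit Arguments. Unset Strict Implicit. Unset Printing Implicit Defensive.

Section Esum.
Variable R : realType.
Local Open Scope ereal_scope.

Lemma esum_term (T : choiceType) (a : T -> \bar R) t :
  (forall x, 0 <= a x) -> a t <= \esum_(x in [set: T]) a x.
Proof.
move=> a0; apply: esum_ge; exists [set t]; first by split=> //; exact: finite_set1.
by rewrite fsbig_set1.
Qed.

Lemma esumZ (T : choiceType) (S : set T) (a : T -> \bar R) (c : R) :
  (0 <= c)%R -> (forall x, 0 <= a x) ->
  \esum_(x in S) (c%:E * a x) = c%:E * \esum_(x in S) a x.
Proof.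
move=> c0 a0; rewrite /esum -ereal_supZl //; last first.
  by apply/set0P; exists 0; exists set0; [exact: fsets_set0| rewrite fsbig_set0].
congr ereal_sup; apply/seteqP; split => y.
  by move=> [X hX <-]; exists (\sum_(x \in X) a x); [exists X|rewrite ge0_mule_fsumr].
by move=> [_ [X hX <-] <-]; exists X => //; rewrite ge0_mule_fsumr.
Qed.

Lemma esum_fubini (T1 T2 : choiceType) (a : T1 * T2 -> \bar R) :
  (forall x, 0 <= a x) ->
  \esum_(z in [set: T1 * T2]) a z = \esum_(x in [set: T1]) \esum_(y in [set: T2]) a (x, y).
Proof.
move=> a0; rewrite (esum_esum (I := setT) (J := fun _ => setT) (a := fun x y => a (x, y))) //.
have -> : [set: T1] `*`` (fun _ => [set: T2]) = [set: T1 * T2].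
  by apply/seteqP; split => z.
by apply: eq_esum => -[].
Qed.

Lemma esum_swap (T1 T2 : choiceType) (a : T1 -> T2 -> \bar R) :
  (forall x y, 0 <= a x y) ->
  \esum_(x in [set: T1]) \esum_(y in [set: T2]) a x y =
  \esum_(y in [set: T2]) \esum_(x in [set: T1]) a x y.
Proof.
move=> a0; rewrite -(@esum_fubini T1 T2 (fun z => a z.1 z.2)) //.
rewrite -(@esum_fubini T2 T1 (fun z => a z.2 z.1)) //.
rewrite (@reindex_esum R _ _ [set: T2 * T1] [set: T1 * T2] (fun z => (z.2, z.1))) //.
split; first by [].
  by move=> [? ?] [? ?] _ _ [-> ->].
by move=> [x y] _; exists (y, x).
Qed.

End Esum.


Section Ereal.
Variable R : realType.

Definition Es (T : choiceType) (u : T -> R) : \bar R := \esum_(x in [set: T]) (u x)%:E.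
Definition nneg (T : Type) (u : T -> R) := forall x, 0 <= u x.

Lemma Es_ge0 (T : choiceType) (u : T -> R) : nneg u -> (0 <= Es u)%E.
Proof. by move=> u0; apply: esum_ge0 => x _; rewrite lee_fin. Qed.

Lemma Es_term (T : choiceType) (u : T -> R) t : nneg u -> ((u t)%:E <= Es u)%E.
Proof. by move=> u0; apply: (@esum_term R T (fun x => (u x)%:E)) => x; rewrite lee_fin. Qed.

Lemma Es_le (T : choiceType) (u v : T -> R) : (forall x, u x <= v x) -> (Es u <= Es v)%E.
Proof. by move=> uv; apply: le_esum => x _; rewrite lee_fin. Qed.

Lemma Es_Z (T : choiceType) (u : T -> R) c : 0 <= c -> nneg u -> Es (fun x => c * u x) = (c%:E * Es u)%E.
Proof.
move=> c0 u0; rewrite /Es -esumZ //; try by move=> x; rewrite lee_fin.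
Qed.

Lemma fineM_ge0 (x y : \bar R) : (0 <= x)%E -> (0 <= y)%E -> fine (x * y)%E = fine x * fine y.
Proof.
case: x => [x| |] //; case: y => [y| |] //=; rewrite ?lee_fin.
- move=> x0 _; case: (ltgtP x 0) x0 => [|x0|->] //= _.
    by rewrite gt0_muley ?lte_fin //= mulr0.
  by rewrite mul0e /= mul0r.
- move=> _ y0; case: (ltgtP y 0) y0 => [|y0|->] //= _.
    by rewrite gt0_mulye ?lte_fin //= mul0r.
  by rewrite mule0 /= mulr0.
- by rewrite mulr0.
Qed.

Lemma l1normE (T : zmodType) (u : T -> R) : nneg u -> l1norm u = fine (Es u).
Proof. by move=> u0; rewrite /l1norm /Es; congr fine; apply: eq_esum => x _; rewrite ger0_norm. Qed.

Lemma nl1_nneg (T : zmodType) (u : T -> R) : nonneg_l1 u -> nneg u.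
Proof. by case. Qed.

Lemma nl1_fin (T : zmodType) (u : T -> R) : nonneg_l1 u -> Es u = (l1norm u)%:E.
Proof.
move=> [u0 su]; rewrite l1normE // fineK //.
rewrite ge0_fin_numE ?Es_ge0 //.
move: su; rewrite /summable; under eq_esum do rewrite /= ger0_norm //.
by [].
Qed.

Lemma nl1I (T : zmodType) (u : T -> R) : nneg u -> (Es u < +oo)%E -> nonneg_l1 u.
Proof.
move=> u0 fin; split => //; rewrite /summable.
by under eq_esum do rewrite /= ger0_norm //.
Qed.

Lemma nl1_bound (T : zmodType) (u : T -> R) x : nonneg_l1 u -> u x <= l1norm u.
Proof. by move=> h; rewrite -lee_fin -nl1_fin //; apply: Es_term; case: h. Qed.

End Ereal.


Section Tensor.
Variable R : realType.

Lemma Es_tensor (T1 T2 : choiceType) (a : T1 -> R) (b : T2 -> R) :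
  nneg a -> nneg b -> Es (fun z : T1 * T2 => a z.1 * b z.2) = (Es a * Es b)%E.
Proof.
move=> a0 b0; rewrite {1}/Es esum_fubini; last by move=> z; rewrite lee_fin mulr_ge0.
transitivity (\esum_(x in [set: T1]) ((a x)%:E * Es b))%E.
  by apply: eq_esum => x _ /=; exact: (Es_Z (a0 x) b0).
have eb0 := Es_ge0 b0.
case Eb: (Es b) eb0 => [r| |] // r0.
  transitivity (\esum_(x in [set: T1]) (r%:E * (a x)%:E))%E.
    by apply: eq_esum => x _; rewrite muleC.
  rewrite esumZ; [by rewrite muleC| by rewrite -lee_fin | by move=> x; rewrite lee_fin].
have [[t at0]|na] := pselect (exists t, 0 < a t).
  have Ea : (0 < Es a)%E by apply: (lt_le_trans _ (Es_term t a0)); rewrite lte_fin.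
  rewrite gt0_muley //; apply/eqP; rewrite eq_le leey /=.
  have := @esum_term R T1 (fun x => ((a x)%:E * +oo)%E) t.
  rewrite gt0_muley ?lte_fin //; apply => x.
  by rewrite mule_ge0 // lee_fin.
have a00 x : a x = 0.
  by apply/eqP; rewrite eq_le a0 andbT leNgt; apply/negP => h; apply: na; exists x.
rewrite esum1; last by move=> x _; rewrite a00 mul0e.
rewrite (_ : Es a = 0%E) ?mul0e //.
by rewrite /Es esum1 // => x _; rewrite a00.
Qed.

End Tensor.


Section MC.
Variable R : realType.

Definition bnn (K : Type) (u : K -> R) := nneg u /\ exists M, forall x, u x <= M.

Lemma nl1_bnn (K : zmodType) (u : K -> R) : nonneg_l1 u -> bnn u.
Proof. move=> h; split; first by case: h. by exists (l1norm u) => x; apply: nl1_bound. Qed.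

Variable K : zmodType.
Implicit Types f g : K -> R.

Lemma mc_ub f g x t : bnn f -> bnn g -> f t * g (x - t) <= maxconv f g x.
Proof.
move=> [f0 [Mf hf]] [g0 [Mg hg]]; apply: ub_le_sup; last by exists t.
by exists (Mf * Mg) => _ [s _ <-]; apply: ler_pM.
Qed.

Lemma mc_le f g x M : (forall t, f t * g (x - t) <= M) -> maxconv f g x <= M.
Proof.
move=> h; apply: ge_sup; first by exists (f 0 * g (x - 0)); exists 0.
by move=> _ [t _ <-]; exact: h.
Qed.

Lemma mc_ge0 f g x : bnn f -> bnn g -> 0 <= maxconv f g x.
Proof.
move=> hf hg; apply: le_trans (mc_ub x 0 hf hg).
by apply: mulr_ge0; [case: hf | case: hg].
Qed.

Lemma mc_bnn f g : bnn f -> bnn g -> bnn (maxconv f g).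
Proof.
move=> hf hg; split; first by move=> x; apply: mc_ge0.
case: hf => f0 [Mf hMf]; case: hg => g0 [Mg hMg].
by exists (Mf * Mg) => x; apply: mc_le => t; apply: ler_pM.
Qed.

Lemma mc_scale f g x c M : 0 <= c -> 0 <= M ->
  (forall t, c * (f t * g (x - t)) <= M) -> c * maxconv f g x <= M.
Proof.
move=> c0 M0 h; case: (ltgtP c 0) c0 => [//|cp|->] _; last by rewrite mul0r.
rewrite mulrC -ler_pdivlMr //; apply: mc_le => t.
by rewrite ler_pdivlMr // mulrC.
Qed.

End MC.

Section MCT.
Variable R : realType.

Lemma bnn_tensor (K1 K2 : zmodType) (a : K1 -> R) (b : K2 -> R) :
  bnn a -> bnn b -> bnn (tensorf a b).
Proof.
move=> [a0 [Ma hMa]] [b0 [Mb hMb]]; split; first by move=> z; apply: mulr_ge0.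
by exists (Ma * Mb) => z; apply: ler_pM.
Qed.

Lemma mc_tensor (K1 K2 : zmodType) (f1 g1 : K1 -> R) (f2 g2 : K2 -> R) :
  bnn f1 -> bnn g1 -> bnn f2 -> bnn g2 ->
  maxconv (tensorf f1 f2) (tensorf g1 g2) = tensorf (maxconv f1 g1) (maxconv f2 g2).
Proof.
move=> hf1 hg1 hf2 hg2; apply/funext => -[x y]; apply/eqP; rewrite eq_le; apply/andP; split.
  apply: mc_le => -[t1 t2]; rewrite /tensorf /= mulrACA.
  apply: ler_pM; try exact: mc_ub; apply: mulr_ge0; by [case: hf1|case: hg1|case: hf2|case: hg2].
have hF := bnn_tensor hf1 hf2; have hG := bnn_tensor hg1 hg2.
rewrite /tensorf /= mulrC; apply: mc_scale; [exact: mc_ge0|exact: mc_ge0|] => t1.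
rewrite mulrC; apply: mc_scale; [apply: mulr_ge0; by [case: hf1|case: hg1]|exact: mc_ge0|] => t2.
apply: le_trans (mc_ub (x, y) (t1, t2) hF hG).
by rewrite /tensorf /= mulrACA.
Qed.

Lemma esum_shift (K : zmodType) (a : K -> \bar R) t :
  \esum_(x in [set: K]) a (x - t) = \esum_(x in [set: K]) a x.
Proof.
symmetry; apply: (@reindex_esum R _ _ [set: K] [set: K] (fun x => x - t)).
split => //; first by move=> x y _ _ /addIr.
by move=> y _; exists (y + t) => //; rewrite addrK.
Qed.

Lemma mc_l1 (K : zmodType) (f g : K -> R) : bnn f -> bnn g ->
  (Es (maxconv f g) <= Es f * Es g)%E.
Proof.
move=> hf hg; have f0 : nneg f by case: hf.
have g0 : nneg g by case: hg.
have step x : ((maxconv f g x)%:E <= \esum_(t in [set: K]) (f t * g (x - t))%:E)%E.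
  case E: (\esum_(t in [set: K]) (f t * g (x - t))%:E) => [s| |]; last 2 first.
  - by rewrite leey.
  - have : (0 <= \esum_(t in [set: K]) (f t * g (x - t))%:E)%E.
      by apply: esum_ge0 => t _; rewrite lee_fin mulr_ge0.
    by rewrite E.
  rewrite lee_fin; apply: mc_le => t; rewrite -lee_fin -E.
  by apply: (@esum_term R K (fun t => (f t * g (x - t))%:E)) => u; rewrite lee_fin mulr_ge0.
apply: le_trans (le_esum (fun x _ => step x)) _.
rewrite esum_swap; last by move=> *; rewrite lee_fin mulr_ge0.
rewrite -Es_tensor // {1}/Es esum_fubini; last by move=> z; rewrite lee_fin mulr_ge0.
rewrite le_eqVlt; apply/orP; left; apply/eqP; apply: eq_esum => t _ /=.
by rewrite (@esum_shift K (fun x => (f t * g x)%:E)).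
Qed.

End MCT.


Section LP.
Variable R : realType.

Lemma pow_bound (x M p : R) : 0 <= x -> x <= M -> 1 <= p -> x `^ p <= M `^ (p - 1) * x.
Proof.
move=> x0 xM p1; rewrite -mulr_powRB1 //; last by apply: lt_le_trans p1.
rewrite mulrC ler_wpM2r // ge0_ler_powR // ?subr_ge0 // nnegrE //.
exact: le_trans xM.
Qed.

Variable K : zmodType.
Implicit Types u : K -> R.

Lemma lpnormE (p : R) u : nneg u -> lpnorm p u = (fine (Es (fun x => powR (u x) p))) `^ p^-1.
Proof. by move=> u0; rewrite /lpnorm /Es; congr (fine _ `^ _); apply: eq_esum => x _; rewrite ger0_norm. Qed.

Lemma lp_sum (p : R) u : nonneg_l1 u -> 1 <= p ->
  (Es (fun x => powR (u x) p) <= (l1norm u `^ p)%:E)%E.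
Proof.
move=> hu p1; have u0 := nl1_nneg hu.
apply: le_trans (Es_le (v := fun x => l1norm u `^ (p - 1) * u x) _) _.
  by move=> x; apply: pow_bound => //; apply: nl1_bound.
rewrite Es_Z ?powR_ge0 // nl1_fin // -EFinM lee_fin mulrC mulr_powRB1 //.
- by rewrite l1normE // fine_ge0 // Es_ge0.
- by apply: lt_le_trans p1.
Qed.

Lemma lp_fin (p : R) u : nonneg_l1 u -> 1 <= p ->
  Es (fun x => powR (u x) p) = (fine (Es (fun x => powR (u x) p)))%:E.
Proof.
move=> hu p1; rewrite fineK // ge0_fin_numE; last by apply: Es_ge0 => x; apply: powR_ge0.
by apply: le_lt_trans (lp_sum hu p1) _; rewrite ltry.
Qed.

Lemma lp_le_l1 (p : R) u : nonneg_l1 u -> 1 <= p -> lpnorm p u <= l1norm u.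
Proof.
move=> hu p1; have u0 := nl1_nneg hu; have p0 : 0 < p by apply: lt_le_trans p1.
have M0 : 0 <= l1norm u by rewrite l1normE // fine_ge0 // Es_ge0.
rewrite lpnormE //.
have -> : l1norm u = (l1norm u `^ p) `^ p^-1 by rewrite -powRrM mulfV ?gt_eqF // powRr1.
apply: ge0_ler_powR.
- by rewrite invr_ge0 ltW.
- by rewrite nnegrE fine_ge0 // Es_ge0 // => x; apply: powR_ge0.
- by rewrite nnegrE powR_ge0.
- by rewrite -lee_fin -lp_fin // lp_sum.
Qed.

Lemma lp_pos (p : R) u t : nonneg_l1 u -> 1 <= p -> 0 < u t -> 0 < lpnorm p u.
Proof.
move=> hu p1 ut; have u0 := nl1_nneg hu; rewrite lpnormE //; apply: powR_gt0.
rewrite -lte_fin -lp_fin //; apply: lt_le_trans (Es_term t _); last by move=> x; apply: powR_ge0.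
by rewrite lte_fin powR_gt0.
Qed.

Lemma lp_zero (p : R) u : p != 0 -> (forall x, u x = 0) -> lpnorm p u = 0.
Proof.
move=> p0 u0; rewrite /lpnorm esum1 ?powR0 ?invr_neq0 //.
by move=> x _; rewrite u0 normr0 powR0.
Qed.

Lemma l1_zero u : (forall x, u x = 0) -> l1norm u = 0.
Proof. by move=> u0; rewrite /l1norm esum1 // => x _; rewrite u0 normr0. Qed.

End LP.

Section LPT.
Variable R : realType.

Lemma lp_tensor (K1 K2 : zmodType) (a : K1 -> R) (b : K2 -> R) (p : R) :
  nneg a -> nneg b -> lpnorm p (tensorf a b) = lpnorm p a * lpnorm p b.
Proof.
move=> a0 b0; rewrite !lpnormE //; last by move=> z; apply: mulr_ge0.
rewrite -powRM ?fine_ge0 ?Es_ge0 //; try by move=> x; apply: powR_ge0.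
rewrite -fineM_ge0 ?Es_ge0 //; try by move=> x; apply: powR_ge0.
rewrite -Es_tensor; try by move=> x; apply: powR_ge0.
by congr (fine (Es _) `^ _); apply/funext => z; rewrite /tensorf powRM.
Qed.

Lemma l1_tensor (K1 K2 : zmodType) (a : K1 -> R) (b : K2 -> R) :
  nneg a -> nneg b -> l1norm (tensorf a b) = l1norm a * l1norm b.
Proof.
move=> a0 b0; rewrite !l1normE //; last by move=> z; apply: mulr_ge0.
by rewrite -fineM_ge0 ?Es_ge0 // -Es_tensor.
Qed.

Lemma nl1_tensor (K1 K2 : zmodType) (a : K1 -> R) (b : K2 -> R) :
  nonneg_l1 a -> nonneg_l1 b -> nonneg_l1 (tensorf a b).
Proof.
move=> ha hb; have a0 := nl1_nneg ha; have b0 := nl1_nneg hb.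
apply: nl1I; first by move=> z; apply: mulr_ge0.
by rewrite /tensorf Es_tensor // !nl1_fin // -EFinM ltry.
Qed.

End LPT.


Section Inf.
Variable R : realType.

Lemma inf_fin (X : Type) (P : set X) (r : X -> R) : P !=set0 -> (forall x, P x -> 0 <= r x) ->
  exists2 i, 0 <= i & ereal_inf [set (r z)%:E | z in P] = i%:E.
Proof.
move=> [x0 Px0] r0.
have lb : (0 <= ereal_inf [set (r z)%:E | z in P])%E.
  by apply: le_ereal_inf_tmp => _ [z Pz <-]; rewrite lee_fin r0.
have ub : (ereal_inf [set (r z)%:E | z in P] <= (r x0)%:E)%E.
  by apply: ereal_inf_lbound; exists x0.
case: (ereal_inf _) lb ub => [i| |] // i0 _; by exists i; rewrite -?lee_fin.
Qed.

Lemma inf_tensor (X1 X2 X : Type) (P1 : set X1) (P2 : set X2) (P : set X)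
  (r1 : X1 -> R) (r2 : X2 -> R) (r : X -> R) (T : X1 -> X2 -> X) :
  P1 !=set0 -> P2 !=set0 -> (forall x, P1 x -> 0 <= r1 x) -> (forall y, P2 y -> 0 <= r2 y) ->
  (forall x y, P1 x -> P2 y -> P (T x y) /\ r (T x y) = r1 x * r2 y) ->
  (ereal_inf [set (r z)%:E | z in P] <=
     ereal_inf [set (r1 x)%:E | x in P1] * ereal_inf [set (r2 y)%:E | y in P2])%E.
Proof.
move=> ne1 ne2 pos1 pos2 hT.
have [i1 i10 E1] := inf_fin ne1 pos1; have [i2 i20 E2] := inf_fin ne2 pos2.
rewrite E1 E2.
set c := ereal_inf _.
have cle x y : P1 x -> P2 y -> (c <= (r1 x * r2 y)%:E)%E.
  move=> Px Py; have [PT rT] := hT x y Px Py.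
  by rewrite -rT; apply: ereal_inf_lbound; exists (T x y).
case: ne1 => x0 Px0; case: ne2 => y0 Py0.
case Ec : c (cle x0 y0 Px0 Py0) => [g| |]; [|by rewrite leye_eq|by move=> _; apply: leNye].
rewrite lee_fin => _.
have stepa y : P2 y -> g <= i1 * r2 y.
  move=> Py; case: (ltgtP (r2 y) 0) (pos2 y Py) => [//|ry|ry] _; last first.
    by have := cle x0 y Px0 Py; rewrite Ec lee_fin ry !mulr0.
  rewrite -ler_pdivrMr //; rewrite -lee_fin -E1; apply: le_ereal_inf_tmp => _ [x Px <-].
  by rewrite lee_fin ler_pdivrMr // -lee_fin -Ec cle.
rewrite -EFinM lee_fin.
case: (ltgtP i1 0) i10 => [//|i1p|i1z] _; last first.
  by rewrite i1z mul0r; have := stepa y0 Py0; rewrite i1z mul0r.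
rewrite mulrC -ler_pdivrMr //; rewrite -lee_fin -E2; apply: le_ereal_inf_tmp => _ [y Py <-].
by rewrite lee_fin ler_pdivrMr // mulrC stepa.
Qed.

Definition delta (K : zmodType) : K -> R := fun x => if x == 0 then 1 else 0.

Lemma delta_nl1 (K : zmodType) : nonneg_l1 (@delta K).
Proof.
have d0 : nneg (@delta K) by move=> x; rewrite /delta; case: ifP.
apply: nl1I => //; rewrite /Es (esumID [set 0]); last by move=> x _; rewrite lee_fin.
rewrite setTI esum_set1 ?lee_fin // esum1 ?adde0 ?ltry // => x [_ /= x0].
by rewrite /delta; case: eqP.
Qed.

Lemma delta_neq0 (K : zmodType) : @delta K <> (fun=> 0).
Proof. by move=> /(congr1 (fun f => f 0)); rewrite /delta eqxx => /eqP; rewrite oner_eq0. Qed.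

Lemma neq0_ex (K : Type) (u : K -> R) : u <> (fun=> 0) -> exists x, u x != 0.
Proof.
move=> h; apply: contrapT => nex; apply: h; apply/funext => x.
by apply/eqP; apply: contrapT => hx; apply: nex; exists x; apply/negP.
Qed.

Lemma tensor_neq0 (K1 K2 : zmodType) (a : K1 -> R) (b : K2 -> R) :
  a <> (fun=> 0) -> b <> (fun=> 0) -> tensorf a b <> (fun=> 0).
Proof.
move=> /neq0_ex [x ax] /neq0_ex [y ay] /(congr1 (fun f => f (x, y))) /eqP.
by rewrite /tensorf /= mulf_eq0 (negPf ax) (negPf ay).
Qed.

Lemma l1norm_ge0 (K : zmodType) (u : K -> R) : 0 <= l1norm u.
Proof. by rewrite /l1norm fine_ge0 // esum_ge0. Qed.

Lemma lpnorm_ge0 (K : zmodType) (p : R) (u : K -> R) : 0 <= lpnorm p u.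
Proof. exact: powR_ge0. Qed.

End Inf.


Section SD.
Variable R : realType.

Lemma sigma_card (T U : pointedType) (A B : T -> set U) :
  (forall x, card_eq (A x) (B x)) ->
  card_eq [set z : T * U | A z.1 z.2] [set z : T * U | B z.1 z.2].
Proof.
move=> h.
have /choice [F hF] : forall x, exists f, set_bij (A x) (B x) f.
  by move=> x; apply/card_set_bijP; exact: h.
apply/card_set_bijP; exists (fun z => (z.1, F z.1 z.2)); split.
- by move=> [x y] /= Axy; have [hf _ _] := hF x; exact: hf.
- move=> [x y] [x' y'] /set_mem /= Axy /set_mem /= Axy' [ex].
  move: Axy'; rewrite -ex => Axy' ey; congr (_, _).
  by have [_ hi _] := hF x; apply: hi => //; apply: mem_set.
- move=> [x y] /= Bxy; have [_ _ hs] := hF x.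
  have [y' Ay' ey'] := hs y Bxy.
  by exists (x, y') => //=; rewrite ey'.
Qed.

Lemma sigma_card2 (T U : pointedType) (A B : U -> set T) :
  (forall y, card_eq (A y) (B y)) ->
  card_eq [set z : T * U | A z.2 z.1] [set z : T * U | B z.2 z.1].
Proof.
move=> h.
have /choice [F hF] : forall y, exists f, set_bij (A y) (B y) f.
  by move=> y; apply/card_set_bijP; exact: h.
apply/card_set_bijP; exists (fun z => (F z.2 z.1, z.2)); split.
- by move=> [x y] /= Axy; have [hf _ _] := hF y; exact: hf.
- move=> [x y] [x' y'] /set_mem /= Axy /set_mem /= Axy' [ex ey].
  move: Axy' ex; rewrite -ey => Axy' ex; congr (_, _).
  by have [_ hi _] := hF y; apply: hi => //; apply: mem_set.
- move=> [x y] /= Bxy; have [_ _ hs] := hF y.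
  have [x' Ax' ex'] := hs x Bxy.
  by exists (x', y) => //=; rewrite ex'.
Qed.


Lemma card_eq_ext (T U : Type) (A A' : set T) (B B' : set U) :
  card_eq A B -> (forall x, A x = A' x) -> (forall x, B x = B' x) -> card_eq A' B'.
Proof.
move=> h eA eB; have -> : A' = A by apply/funext => x; rewrite eA.
by have -> : B' = B by apply/funext => x; rewrite eB.
Qed.

Lemma fiber_card (K : zmodType) (c t : R) (u v : K -> R) : 0 < t -> 0 <= c ->
  same_distr u v -> card_eq [set y | t <= c * u y] [set y | t <= c * v y].
Proof.
move=> t0 c0 huv; case: (ltgtP c 0) c0 => [//|cp|cz] _.
  have e w : [set y | t <= c * w y] = [set y | t / c <= w y].
    by apply/seteqP; split => y /=; rewrite ler_pdivrMr // [w y * c]mulrC.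
  by rewrite !e; apply: huv; rewrite divr_gt0.
have e w : [set y | t <= c * w y] = set0.
  by apply/seteqP; split => y //=; rewrite cz mul0r leNgt t0.
by rewrite !e.
Qed.

Lemma sd_tensor (K1 K2 : zmodType) (g1 h1 : K1 -> R) (g2 h2 : K2 -> R) :
  nneg g1 -> nneg h2 -> same_distr g1 h1 -> same_distr g2 h2 ->
  same_distr (tensorf g1 g2) (tensorf h1 h2).
Proof.
move=> g10 h20 s1 s2 t t0; rewrite /tensorf.
apply: (@card_eq_trans _ _ _ _ [set z : K1 * K2 | t <= g1 z.1 * h2 z.2]).
  by apply: (@sigma_card K1 K2 (fun x y => t <= g1 x * g2 y) (fun x y => t <= g1 x * h2 y)) => x;
    apply: fiber_card.
apply: (@sigma_card2 K1 K2 (fun y x => t <= g1 x * h2 y) (fun y x => t <= h1 x * h2 y)) => y.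
apply: (card_eq_ext (fiber_card t0 (h20 y) s1)) => x /=; by rewrite mulrC.
Qed.

End SD.


Section Fib.
Variable R : realType.
Variables K1 K2 : zmodType.

Definition fib (g : K1 * K2 -> R) (b : K2) : K1 -> R := fun x => g (x, b).
Definition Gn (p : R) (g : K1 * K2 -> R) : K2 -> R := fun b => lpnorm p (fib g b).

Lemma Es_fib (u : K1 * K2 -> R) : nneg u ->
  Es u = \esum_(b in [set: K2]) Es (fib u b).
Proof.
move=> u0; rewrite {1}/Es esum_fubini; last by move=> z; rewrite lee_fin.
by rewrite esum_swap // => x y; rewrite lee_fin.
Qed.

Lemma fib_nl1 g b : nonneg_l1 g -> nonneg_l1 (fib g b).
Proof.
move=> hg; have g0 := nl1_nneg hg; apply: nl1I; first by move=> x; apply: g0.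
apply: le_lt_trans (_ : Es g < +oo)%E; last by rewrite nl1_fin // ltry.
rewrite Es_fib //; apply: (@esum_term R K2 (fun b => Es (fib g b))) => c.
by apply: Es_ge0 => x; apply: g0.
Qed.

Lemma Gn_nl1 (p : R) g : nonneg_l1 g -> 1 <= p -> nonneg_l1 (Gn p g).
Proof.
move=> hg p1; have g0 := nl1_nneg hg.
apply: nl1I; first by move=> b; apply: lpnorm_ge0.
apply: le_lt_trans (_ : Es g < +oo)%E; last by rewrite nl1_fin // ltry.
rewrite Es_fib //; apply: le_esum => b _.
by rewrite (nl1_fin (fib_nl1 b hg)) lee_fin; apply: lp_le_l1 => //; apply: fib_nl1.
Qed.

Lemma Gn_norm (p : R) g : nonneg_l1 g -> 1 <= p -> lpnorm p (Gn p g) = lpnorm p g.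
Proof.
move=> hg p1; have g0 := nl1_nneg hg; have p0 : 0 < p by apply: lt_le_trans p1.
rewrite !lpnormE //; last by move=> b; apply: lpnorm_ge0.
congr (fine _ `^ _).
have pg0 : nneg (fun z => powR (g z) p) by move=> z; apply: powR_ge0.
rewrite (Es_fib pg0); apply: eq_esum => b _.
have hb := fib_nl1 b hg.
rewrite /Gn lpnormE; last by move=> x; apply: g0.
rewrite -powRrM mulVf ?gt_eqF // powRr1; last first.
  by rewrite fine_ge0 // Es_ge0 // => x; apply: powR_ge0.
by rewrite -lp_fin.
Qed.

Lemma Gn_neq0 (p : R) g : nonneg_l1 g -> 1 <= p -> g <> (fun=> 0) -> Gn p g <> (fun=> 0).
Proof.
move=> hg p1 /neq0_ex [[x b] gxb] /(congr1 (fun F => F b)) /eqP.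
have gp : 0 < fib g b x by rewrite lt0r gxb (nl1_nneg hg).
by rewrite /Gn gt_eqF // (lp_pos (fib_nl1 b hg) p1 gp).
Qed.

Lemma lp_pos_neq0 (K : zmodType) (p : R) (u : K -> R) : nonneg_l1 u -> 1 <= p -> u <> (fun=> 0) ->
  0 < lpnorm p u.
Proof.
move=> hu p1 /neq0_ex [x ux]; apply: (lp_pos hu p1 (t := x)).
by rewrite lt0r ux (nl1_nneg hu).
Qed.

End Fib.


Section Key.
Variable R : realType.

Lemma mc_nl1 (K : zmodType) (f g : K -> R) : nonneg_l1 f -> nonneg_l1 g -> nonneg_l1 (maxconv f g).
Proof.
move=> hf hg; have bf := nl1_bnn hf; have bg := nl1_bnn hg.
apply: nl1I; first by move=> x; apply: mc_ge0.
apply: le_lt_trans (mc_l1 bf bg) _.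
by rewrite !nl1_fin // -EFinM ltry.
Qed.

Variables K1 K2 : zmodType.

Lemma fib_bnn (g : K1 * K2 -> R) b : bnn g -> bnn (fib g b).
Proof. by move=> [g0 [M hM]]; split; [move=> x; apply: g0|exists M => x; apply: hM]. Qed.

Variables (f1 : K1 -> R) (f2 : K2 -> R) (g h : K1 * K2 -> R).
Hypotheses (hf1 : bnn f1) (hf2 : bnn f2) (hg : bnn g) (hh : bnn h).

Lemma pt_bound (a2 b c : K2) x :
  f2 a2 * maxconv (maxconv f1 (fib g b)) (fib h c) x <=
  maxconv (maxconv (tensorf f1 f2) g) h (x, a2 + b + c).
Proof.
have hF := bnn_tensor hf1 hf2; have hFg := mc_bnn hF hg.
have hM0 := mc_ge0 (x, a2 + b + c) hFg hh.
have f20 : 0 <= f2 a2 by case: hf2.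
have hc0 : nneg (fib h c) by case: (fib_bnn c hh).
have f10 : nneg f1 by case: hf1.
have gb0 : nneg (fib g b) by case: (fib_bnn b hg).
apply: mc_scale => // s1.
have e : f2 a2 * (maxconv f1 (fib g b) s1 * fib h c (x - s1)) =
         (f2 a2 * fib h c (x - s1)) * maxconv f1 (fib g b) s1 by ring.
rewrite e; apply: mc_scale => //; first by apply: mulr_ge0.
move=> t1.
apply: le_trans (mc_ub (x, a2 + b + c) (s1, a2 + b) hFg hh).
have e2 : h ((x, a2 + b + c) - (s1, a2 + b)) = fib h c (x - s1).
  by rewrite /fib /=; congr (h (_, _)); rewrite addrC addKr.
rewrite e2.
have e3 : f2 a2 * fib h c (x - s1) * (f1 t1 * fib g b (s1 - t1)) =
   (tensorf f1 f2 (t1, a2) * g ((s1, a2 + b) - (t1, a2))) * fib h c (x - s1).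
  rewrite /tensorf /fib /=.
  have -> : (s1, a2 + b) - (t1, a2) = (s1 - t1, a2 + b - a2) :> K1 * K2 by [].
  rewrite [a2 + b]addrC addrK; ring.
by rewrite e3; apply: ler_wpM2r; [exact: hc0 | exact: mc_ub].
Qed.

End Key.


Section Fiber.
Variable R : realType.
Variables K1 K2 : zmodType.
Variables (f1 : K1 -> R) (f2 : K2 -> R) (g h : K1 * K2 -> R) (p q r1 : R).
Hypotheses (hf1 : nonneg_l1 f1) (hf2 : nonneg_l1 f2) (hg : nonneg_l1 g) (hh : nonneg_l1 h).
Hypotheses (p1 : 1 <= p) (q1 : 1 <= q) (r10 : 0 <= r1).
Hypothesis hr1 : forall b c, r1 * Gn p g b * Gn q h c <=
  l1norm (maxconv (maxconv f1 (fib g b)) (fib h c)).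

Lemma fiber_bound y psi :
  Es (fun x => maxconv (maxconv (tensorf f1 f2) g) h (x, y)) = psi%:E ->
  r1 * maxconv (maxconv f2 (Gn p g)) (Gn q h) y <= psi.
Proof.
move=> Epsi.
have bG := nl1_bnn (Gn_nl1 hg p1); have bH := nl1_bnn (Gn_nl1 hh q1).
have bf1 := nl1_bnn hf1; have bf2 := nl1_bnn hf2.
have bg := nl1_bnn hg; have bh := nl1_bnn hh.
have psi0 : 0 <= psi.
  rewrite -lee_fin -Epsi; apply: Es_ge0 => x.
  by apply: mc_ge0 => //; apply: mc_bnn => //; apply: bnn_tensor.
have G0 : nneg (Gn p g) by case: bG.
have H0 : nneg (Gn q h) by case: bH.
have f20 : nneg f2 by case: bf2.
apply: mc_scale => // s.
have e (a b c : R) : a * (b * c) = (a * c) * b by ring.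
rewrite e; apply: mc_scale => //; first by apply: mulr_ge0.
move=> a2.
have ey : a2 + (s - a2) + (y - s) = y by rewrite [a2 + _]addrC subrK addrC subrK.
have e2 (a b c d : R) : a * b * (c * d) = c * (a * d * b) by ring.
rewrite e2; apply: le_trans (ler_wpM2l (f20 a2) (hr1 (s - a2) (y - s))) _.
have hP := mc_nl1 (mc_nl1 hf1 (fib_nl1 (s - a2) hg)) (fib_nl1 (y - s) hh).
rewrite -lee_fin -Epsi EFinM -(nl1_fin hP) -Es_Z //; last by apply: nl1_nneg.
apply: Es_le => x; rewrite -{2}ey; exact: pt_bound.
Qed.

End Fiber.


Section Lower.
Variable R : realType.

Lemma ratio_ge0 (K : zmodType) (f g h : K -> R) p q :
  0 <= l1norm (maxconv (maxconv f g) h) / (lpnorm p g * lpnorm q h).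
Proof. by rewrite divr_ge0 ?l1norm_ge0 // mulr_ge0 // lpnorm_ge0. Qed.

Lemma gamma_p_fin (K : zmodType) (p : R) (f : K -> R) :
  exists2 r, 0 <= r & gamma_p p f = r%:E.
Proof.
apply: inf_fin; last by move=> *; apply: ratio_ge0.
exists (@delta R K, @delta R K); split; first exact: delta_nl1.
by split; [exact: delta_neq0|split; [exact: delta_nl1|exact: delta_neq0]].
Qed.

Lemma gamma_p_le (K : zmodType) (p : R) (f g h : K -> R) :
  nonneg_l1 g -> g <> (fun=> 0) -> nonneg_l1 h -> h <> (fun=> 0) ->
  (gamma_p p f <= (l1norm (maxconv (maxconv f g) h) / (lpnorm p g * lpnorm (conj_exp p) h))%:E)%E.
Proof. by move=> *; apply: ereal_inf_lbound; exists (g, h). Qed.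

Lemma conj_exp_ge1 (p : R) : 1 < p -> 1 <= conj_exp p.
Proof.
move=> p1; have p10 : 0 < p - 1 by rewrite subr_gt0.
by rewrite /conj_exp ler_pdivlMr // mul1r lerBlDr lerDl.
Qed.

Lemma gamma_ge (K1 K2 : zmodType) (f1 : K1 -> R) (f2 : K2 -> R) (p : R) :
  nonneg_l1 f1 -> nonneg_l1 f2 -> 1 < p ->
  (gamma_p p f1 * gamma_p p f2 <= gamma_p p (tensorf f1 f2))%E.
Proof.
move=> hf1 hf2 p1.
have q1 := conj_exp_ge1 p1; have p1' : 1 <= p by apply: ltW.
have [r1 r10 E1] := gamma_p_fin p f1; have [r2 r20 E2] := gamma_p_fin p f2.
rewrite E1 E2; apply: le_ereal_inf_tmp => _ [[g h] [hg [g0 [hh h0]]] <-] /=.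
rewrite -EFinM lee_fin.
have P0 := lp_pos_neq0 hg p1' g0; have Q0 := lp_pos_neq0 hh q1 h0.
rewrite ler_pdivlMr; last exact: mulr_gt0 P0 Q0.
have pn0 : p != 0 by rewrite gt_eqF // (lt_le_trans ltr01 p1').
have qn0 : conj_exp p != 0 by rewrite gt_eqF // (lt_le_trans ltr01 q1).
have hr1 b c : r1 * Gn p g b * Gn (conj_exp p) h c <=
    l1norm (maxconv (maxconv f1 (fib g b)) (fib h c)).
  case: (pselect (fib g b = fun=> 0)) => [gb0|gb0].
    by rewrite /Gn gb0 lp_zero ?mulr0 ?mul0r ?l1norm_ge0 //; move=> ?.
  case: (pselect (fib h c = fun=> 0)) => [hc0|hc0].
    by rewrite /Gn hc0 [lpnorm (conj_exp p) _]lp_zero ?mulr0 ?mul0r ?l1norm_ge0 //; move=> ?.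
  have := gamma_p_le p f1 (fib_nl1 b hg) gb0 (fib_nl1 c hh) hc0.
  rewrite E1 lee_fin ler_pdivlMr; first by rewrite mulrA.
  by rewrite mulr_gt0 // lp_pos_neq0 //; apply: fib_nl1.
have hG := Gn_nl1 hg p1'; have hH := Gn_nl1 hh q1.
have := gamma_p_le p f2 hG (Gn_neq0 hg p1' g0) hH (Gn_neq0 hh q1 h0).
rewrite E2 lee_fin ler_pdivlMr; last first.
  by apply: mulr_gt0; apply: lp_pos_neq0 => //; apply: Gn_neq0.
rewrite (Gn_norm hg p1') (Gn_norm hh q1) => hK2.
have hPhi := mc_nl1 (mc_nl1 (nl1_tensor hf1 hf2) hg) hh.
have hK := mc_nl1 (mc_nl1 hf2 hG) hH.
have key : r1 * l1norm (maxconv (maxconv f2 (Gn p g)) (Gn (conj_exp p) h)) <=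
           l1norm (maxconv (maxconv (tensorf f1 f2) g) h).
  rewrite -lee_fin EFinM -(nl1_fin hK) -(nl1_fin hPhi) -Es_Z //; last exact: nl1_nneg.
  rewrite (Es_fib (nl1_nneg hPhi)) {1}/Es; apply: le_esum => y _.
  have hy := nl1_fin (fib_nl1 y hPhi).
  rewrite hy lee_fin; apply: fiber_bound => //; exact: hf1.
rewrite -mulrA; apply: le_trans key.
by rewrite ler_wpM2l.
Qed.

End Lower.


Section Upper.
Variable R : realType.
Variables K1 K2 : zmodType.

Lemma ratio_tensor (f1 g1 h1 : K1 -> R) (f2 g2 h2 : K2 -> R) (a b : R) :
  nonneg_l1 f1 -> nonneg_l1 g1 -> nonneg_l1 h1 ->
  nonneg_l1 f2 -> nonneg_l1 g2 -> nonneg_l1 h2 ->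
  l1norm (maxconv (maxconv (tensorf f1 f2) (tensorf g1 g2)) (tensorf h1 h2)) /
    (lpnorm a (tensorf g1 g2) * lpnorm b (tensorf h1 h2)) =
  (l1norm (maxconv (maxconv f1 g1) h1) / (lpnorm a g1 * lpnorm b h1)) *
  (l1norm (maxconv (maxconv f2 g2) h2) / (lpnorm a g2 * lpnorm b h2)).
Proof.
move=> hf1 hg1 hh1 hf2 hg2 hh2.
have bf1 := nl1_bnn hf1; have bg1 := nl1_bnn hg1; have bh1 := nl1_bnn hh1.
have bf2 := nl1_bnn hf2; have bg2 := nl1_bnn hg2; have bh2 := nl1_bnn hh2.
rewrite (mc_tensor bf1 bg1 bf2 bg2).
rewrite (mc_tensor (mc_bnn bf1 bg1) bh1 (mc_bnn bf2 bg2) bh2).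
rewrite l1_tensor; last 2 first.
- by case: (mc_bnn (mc_bnn bf1 bg1) bh1).
- by case: (mc_bnn (mc_bnn bf2 bg2) bh2).
rewrite !lp_tensor; try exact: nl1_nneg.
rewrite mulf_div; congr (_ / _).
have e (x y z w : R) : x * z * (y * w) = x * y * (z * w) by ring.
exact: e.
Qed.

Lemma nl1_neq0_tensor (g1 : K1 -> R) (g2 : K2 -> R) :
  nonneg_l1 g1 /\ g1 <> (fun=> 0) -> nonneg_l1 g2 /\ g2 <> (fun=> 0) ->
  nonneg_l1 (tensorf g1 g2) /\ tensorf g1 g2 <> (fun=> 0).
Proof. by move=> [? ?] [? ?]; split; [apply: nl1_tensor|apply: tensor_neq0]. Qed.

Variables (f1 : K1 -> R) (f2 : K2 -> R).
Hypotheses (hf1 : nonneg_l1 f1) (hf2 : nonneg_l1 f2).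

Lemma gamma_p_le_prod (p : R) :
  (gamma_p p (tensorf f1 f2) <= gamma_p p f1 * gamma_p p f2)%E.
Proof.
apply: (inf_tensor (T := fun gh1 gh2 => (tensorf gh1.1 gh2.1, tensorf gh1.2 gh2.2))).
- exists (@delta R K1, @delta R K1); split; first exact: delta_nl1.
  by split; [exact: delta_neq0|split; [exact: delta_nl1|exact: delta_neq0]].
- exists (@delta R K2, @delta R K2); split; first exact: delta_nl1.
  by split; [exact: delta_neq0|split; [exact: delta_nl1|exact: delta_neq0]].
- by move=> *; apply: ratio_ge0.
- by move=> *; apply: ratio_ge0.
move=> [g1 h1] [g2 h2] /= [hg1 [g10 [hh1 h10]]] [hg2 [g20 [hh2 h20]]]; split.
  have [? ?] := nl1_neq0_tensor (conj hg1 g10) (conj hg2 g20).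
  by have [? ?] := nl1_neq0_tensor (conj hh1 h10) (conj hh2 h20).
exact: ratio_tensor.
Qed.

Lemma gamma'_le_prod :
  (gamma' (tensorf f1 f2) <= gamma' f1 * gamma' f2)%E.
Proof.
apply: (inf_tensor (T := fun gh1 gh2 => (tensorf gh1.1 gh2.1, tensorf gh1.2 gh2.2))).
- exists (@delta R K1, @delta R K1); split; first exact: delta_nl1.
  split; [exact: delta_neq0|split; [exact: delta_nl1|split; [exact: delta_neq0|]]].
  by move=> t _.
- exists (@delta R K2, @delta R K2); split; first exact: delta_nl1.
  split; [exact: delta_neq0|split; [exact: delta_nl1|split; [exact: delta_neq0|]]].
  by move=> t _.
- by move=> *; apply: ratio_ge0.
- by move=> *; apply: ratio_ge0.
move=> [g1 h1] [g2 h2] /= [hg1 [g10 [hh1 [h10 s1]]]] [hg2 [g20 [hh2 [h20 s2]]]]; split.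
  have [? ?] := nl1_neq0_tensor (conj hg1 g10) (conj hg2 g20).
  have [? ?] := nl1_neq0_tensor (conj hh1 h10) (conj hh2 h20).
  do 4! split => //.
  by apply: sd_tensor => //; apply: nl1_nneg.
exact: ratio_tensor.
Qed.

Lemma gamma''_le_prod :
  (gamma'' (tensorf f1 f2) <= gamma'' f1 * gamma'' f2)%E.
Proof.
apply: (inf_tensor (T := fun g1 g2 => tensorf g1 g2)).
- by exists (@delta R K1); split; [exact: delta_nl1|exact: delta_neq0].
- by exists (@delta R K2); split; [exact: delta_nl1|exact: delta_neq0].
- by move=> *; rewrite divr_ge0 ?l1norm_ge0 // exprn_ge0 // lpnorm_ge0.
- by move=> *; rewrite divr_ge0 ?l1norm_ge0 // exprn_ge0 // lpnorm_ge0.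
move=> g1 g2 /= [hg1 g10] [hg2 g20]; split.
  exact: (nl1_neq0_tensor (conj hg1 g10) (conj hg2 g20)).
by rewrite !expr2; apply: ratio_tensor.
Qed.

End Upper.


Unset Implicit Arguments. Set Strict Implicit.

Theorem mainTheorem11 (R : realType) (G1 G2 : zmodType)
  (f1 : G1 -> R) (f2 : G2 -> R) (p : R) :
  nonneg_l1 f1 -> nonneg_l1 f2 -> 1 < p ->
  [/\ gamma_p p (tensorf f1 f2) = (gamma_p p f1 * gamma_p p f2)%E,
      (gamma' (tensorf f1 f2) <= gamma' f1 * gamma' f2)%E &
      (gamma'' (tensorf f1 f2) <= gamma'' f1 * gamma'' f2)%E].
Proof.
move=> hf1 hf2 p1; split.
- by apply/eqP; rewrite eq_le gamma_p_le_prod // gamma_ge.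
- exact: gamma'_le_prod.
- exact: gamma''_le_prod.
Qed.
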